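(* Let $\mathbb{K}$ be a field of characteristic not $2$ and $n\geq 3$. Let $\mathcal{V}$ be a linear subspace of $M_n(\mathbb{K})$ in which every matrix has at most two distinct eigenvalues in $\mathbb{K}$, and assume $\mathcal{V}$ is spanned by matrices of rank $1$ and trace $0$. Then $\dim\mathcal{V}\leq n^2/2$. *)

(* Defs.v *)
From HB Require Import structures.
From mathcomp Require Import all_boot all_order all_algebra.
Set Implicit Arguments. Unset Strict Implicit. Unset Printing Implicit Defensive.
Import Order.TTheory GRing.Theory Num.Theory.
Local Open Scope ring_scope.

Definition at_most_two_eigenvalues (K : fieldType) (n : nat) (A : 'M[K]_n) :=
  forall a b c : K, eigenvalue A a -> eigenvalue A b -> eigenvalue A c ->
    [\/ a = b, b = c | a = c].

(* Main.v *)
Require Import Defs.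
From HB Require Import structures.
From mathcomp Require Import all_boot all_order all_algebra.
Import Order.TTheory GRing.Theory Num.Theory.
Local Open Scope ring_scope.

Lemma char2 (K : fieldType) : (2 \notin [pchar K])%N -> (1 : K) != -1.
Proof.
move=> h; apply/negP => /eqP e; move: h; rewrite inE /=.
have -> : (2%:R : K) = 1 + 1 by rewrite -natr1.
by rewrite {1}e addNr eqxx.
Qed.

Lemma rank1_dec (K : fieldType) n (A : 'M[K]_n) : \rank A = 1%N ->
  exists (c : 'cV[K]_n) (r : 'rV[K]_n), A = c *m r.
Proof.
move=> h; have := mulmx_base A; move: (col_base A) (row_base A).
rewrite h => c r <-; by exists c, r.
Qed.

Lemma tr11 (K : fieldType) (B : 'M[K]_1) : \tr B = B 0 0.
Proof. by rewrite /mxtrace big_ord1. Qed.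

Lemma trE (K : fieldType) m n (A : 'M[K]_(m,n)) B :
  \tr (A *m B) = \sum_i \sum_j A i j * B j i.
Proof. by apply: eq_bigr => i _; rewrite mxE. Qed.

Lemma dotE (K : fieldType) m n (A B : 'M[K]_(m,n)) :
  \sum_k mxvec A 0 k * mxvec B 0 k = \sum_i \sum_j A i j * B i j.
Proof.
rewrite (reindex _ (curry_mxvec_bij _ _)) /= pair_bigA.
by apply: eq_bigr => [[i j]] _ /=; rewrite !mxvecE.
Qed.
Lemma pair0 (K : fieldType) n (hchar : (2 \notin [pchar K])%N) (hn : (3 <= n)%N)
  (c d : 'cV[K]_n) (r s : 'rV[K]_n) :
  r *m c = 0 -> s *m d = 0 ->
  (forall l : K, at_most_two_eigenvalues (c *m r + l *: (d *m s))) ->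
  \tr ((c *m r) *m (d *m s)) = 0.
Proof.
move=> rc sd H.
set a := (r *m d) 0 0; set b := (s *m c) 0 0.
have rd : r *m d = a%:M by rewrite [LHS]mx11_scalar.
have sc : s *m c = b%:M by rewrite [LHS]mx11_scalar.
have -> : \tr ((c *m r) *m (d *m s)) = a * b.
  rewrite -mulmxA mxtrace_mulC tr11 !mulmxA rd -mulmxA sc.
  by rewrite -scalar_mxM mxE /= mulr1n.
apply/eqP; apply/negPn/negP => nz.
have ha : a != 0 by apply: contra nz => /eqP->; rewrite mul0r.
have hb : b != 0 by apply: contra nz => /eqP->; rewrite mulr0.
set l := (a * b)^-1.
have la : l * a = b^-1 by rewrite /l invfM mulrAC mulVf // mul1r.
set C := c *m r + l *: (d *m s).
have eig (e : K) : e * e = 1 -> eigenvalue C e.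
  move=> ee; apply/eigenvalueP; exists (r + (e / b) *: s).
    rewrite /C mulmxDl !mulmxDr -!scalemxAr -!scalemxAl !mulmxA rc rd sc sd.
    rewrite !mul0mx !mul_scalar_mx !scaler0 add0r addr0 !scalerA.
    rewrite scalerDr scalerA addrC; congr (_ + _).
      by rewrite divfK.
    by rewrite la mulrA ee mul1r.
  apply/negP => /eqP h0.
  have : ((r + (e / b) *: s) *m c) 0 0 = 0 by rewrite h0 mul0mx mxE.
  rewrite mulmxDl -scalemxAl rc sc add0r !mxE /= mulr1n.
  rewrite divfK // => e0; move: ee; rewrite e0 mul0r => /eqP.
  by rewrite eq_sym oner_eq0.
have e1 : eigenvalue C 1 by apply: eig; rewrite mulr1.
have e2 : eigenvalue C (-1) by apply: eig; rewrite mulrNN mulr1.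
have e0 : eigenvalue C 0.
  rewrite /eigenvalue /eigenspace raddf0 subr0 kermx_eq0 /row_free.
  apply: contraTN isT => /eqP hr.
  have : (\rank C <= 2)%N.
    apply: leq_trans (mxrank_add _ _) _.
    rewrite -[2%N]/(1+1)%N; apply: leq_add.
      by apply: leq_trans (mxrankM_maxl _ _) _; apply: rank_leq_col.
    apply: leq_trans (mxrank_scale _ _) _.
    by apply: leq_trans (mxrankM_maxl _ _) _; apply: rank_leq_col.
  by rewrite hr; move=> h; have := leq_trans hn h.
have := @char2 K hchar.
case: (H l 1 (-1) 0 e1 e2 e0) => h.
- by rewrite {1}h eqxx.
- by move=> _; move/eqP: h; rewrite oppr_eq0 oner_eq0.
- by move=> _; move/eqP: h; rewrite oner_eq0.
Qed.

Theorem mainTheorem11 (K : fieldType) (n : nat)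
  (hchar : (2 \notin [pchar K])%N) (hn : (3 <= n)%N)
  (V : {vspace 'M[K]_n})
  (hV : forall A : 'M[K]_n, A \in V -> at_most_two_eigenvalues A)
  (hspan : exists s : seq 'M[K]_n,
      (forall A, A \in s -> \rank A = 1%N /\ \tr A = 0) /\ V = <<s>>%VS) :
  (2 * \dim V <= n ^ 2)%N.
Proof.
have ortho : forall A B, A \in V -> B \in V -> \tr (A *m B) = 0.
  case: hspan => s [hs eV].
  have pair : forall X Y, X \in s -> Y \in s -> \tr (X *m Y) = 0.
    move=> X Y hX hY.
    case: (hs X hX) => /rank1_dec [c [r eX]]; rewrite eX => trX.
    case: (hs Y hY) => /rank1_dec [d [s' eY]]; rewrite eY => trY.
    apply: pair0 => //.
    - by rewrite [LHS]mx11_scalar -tr11 -mxtrace_mulC trX raddf0.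
    - by rewrite [LHS]mx11_scalar -tr11 -mxtrace_mulC trY raddf0.
    - move=> l; apply: hV; rewrite eV -eX -eY memvD ?memvZ ?memv_span //.
  rewrite eV => A B /(@coord_span _ _ _ (in_tuple s)) -> /(@coord_span _ _ _ (in_tuple s)) ->.
  rewrite mulmx_suml linear_sum big1 // => i _.
  rewrite mulmx_sumr linear_sum big1 // => j _.
  rewrite -scalemxAl -scalemxAr !linearZ /= pair ?mulr0 //;
    by apply: mem_nth; rewrite (leq_trans (ltn_ord _)) ?size_tuple.
set d := \dim V.
set bs := vbasis V.
have bfree := basis_free (vbasisP V).
have bmem (i : 'I_d) : bs`_i \in V.
  by apply: vbasis_mem; apply: mem_nth; rewrite size_tuple.
pose M := \matrix_(i < d) mxvec bs`_i.
pose M2 := \matrix_(i < d) mxvec (bs`_i)^T.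
have freeM : row_free M.
  apply: inj_row_free => v hv; apply/rowP => i; rewrite mxE.
  move/freeP: bfree => /(_ (fun i => v 0 i)); apply => //.
  apply/eqP; rewrite -mxvec_eq0 linear_sum /=; apply/eqP; rewrite -[RHS]hv mulmx_sum_row.
  by apply: eq_bigr => j _; rewrite linearZ /= rowK.
have freeM2 : row_free M2.
  apply: inj_row_free => v hv; apply/rowP => i; rewrite mxE.
  move/freeP: bfree => /(_ (fun i => v 0 i)); apply => //.
  apply: trmx_inj; rewrite trmx0 linear_sum /=.
  apply/eqP; rewrite -mxvec_eq0 linear_sum /=; apply/eqP; rewrite -[RHS]hv mulmx_sum_row.
  by apply: eq_bigr => j _; rewrite !linearZ /= rowK.
have M0 : M *m M2^T = 0.
  apply/matrixP => i j; rewrite !mxE.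
  transitivity (\sum_k mxvec bs`_i 0 k * mxvec (bs`_j)^T 0 k).
    by apply: eq_bigr => k _; rewrite !mxE.
  rewrite dotE -[RHS](ortho _ _ (bmem i) (bmem j)) trE.
  by apply: eq_bigr => x _; apply: eq_bigr => y _; rewrite mxE.
have := mxrank_mul_min M M2^T.
rewrite M0 mxrank0 mxrank_tr (eqP freeM) (eqP freeM2) -mulnn.
move=> h; rewrite mul2n -addnn; move: h; rewrite leqn0 subn_eq0.
done.
Qed.
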